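(* Let $n_0\ge1$ and $n_1=2n_0$. For $\ell\in\{0,1\}$ let $\mathbf{h}^\ell_k\in\mathbb{R}^{n_\ell}$, $k=0,\dots,n_\ell-1$, be the vectors with entries $(\mathbf{h}^\ell_k)_j=\cos\frac{2(j+\frac12)k\pi}{n_\ell}+\sin\frac{2(j+\frac12)k\pi}{n_\ell}$, $j=0,\dots,n_\ell-1$. Let $\mathbf{P}\in\mathbb{R}^{n_1\times n_0}$ be defined by $\mathbf{P}_{2j,j}=\mathbf{P}_{2j+1,j}=1$ for $j=0,\dots,n_0-1$ and all other entries $0$, and let $c_k:=\cos(k\pi/n_1)$. Then for all $k=0,\dots,n_0-1$, $\mathbf{P}\mathbf{h}^0_k=c_k\mathbf{h}^1_k-c_{n_0+k}\mathbf{h}^1_{n_0+k}$.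
   Context: Indices of vectors and matrices start at $0$. *)

(* Defs.v *)
From HB Require Import structures.
From mathcomp Require Import all_boot all_order all_algebra.
From mathcomp Require Import all_classical all_reals all_analysis.
Set Implicit Arguments. Unset Strict Implicit. Unset Printing Implicit Defensive.
Import Order.TTheory GRing.Theory Num.Theory.
Local Open Scope ring_scope.

Definition hvec (R : realType) (n k : nat) : 'cV[R]_n :=
  \col_(j < n) (cos (2 * ((j%:R + 2^-1) * k%:R * pi) / n%:R)
              + sin (2 * ((j%:R + 2^-1) * k%:R * pi) / n%:R)).

Definition Pmat (R : realType) (n0 : nat) : 'M[R]_(2 * n0, n0) :=
  \matrix_(i < 2 * n0, j < n0) (if (i %/ 2 == j)%N then 1 else 0).

Definition ccoef (R : realType) (n1 k : nat) : R := cos (k%:R * pi / n1%:R).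

(* Main.v *)
Require Import Defs.
From HB Require Import structures.
From mathcomp Require Import all_boot all_order all_algebra.
From mathcomp Require Import all_classical all_reals all_analysis.
From mathcomp Require Import ring lra.
Import Order.TTheory GRing.Theory Num.Theory.
Local Open Scope ring_scope.

Lemma cosD2pin (R : realType) (x : R) m : cos (x + m%:R * (pi *+ 2)) = cos x.
Proof.
elim: m => [|m IH]; first by rewrite mul0r addr0.
by rewrite -[m.+1]addn1 natrD mulrDl mul1r addrA cosD2pi.
Qed.

Lemma sinD2pin (R : realType) (x : R) m : sin (x + m%:R * (pi *+ 2)) = sin x.
Proof.
elim: m => [|m IH]; first by rewrite mul0r addr0.
by rewrite -[m.+1]addn1 natrD mulrDl mul1r addrA sinD2pi.
Qed.

Theorem mainTheorem9 (R : realType) (n0 : nat) (hn0 : (1 <= n0)%N) :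
  forall k : nat, (k < n0)%N ->
    Pmat R n0 *m hvec R n0 k =
      ccoef R (2 * n0) k *: hvec R (2 * n0) k
      - ccoef R (2 * n0) (n0 + k) *: hvec R (2 * n0) (n0 + k).
Proof.
move=> k hk; apply/matrixP => i j; rewrite !mxE.
have him : (i %/ 2 < n0)%N by have := ltn_ord i; rewrite ltn_divLR // (mulnC n0 2).
rewrite (bigD1 (Ordinal him)) //= !mxE eqxx mul1r big1 ?addr0; last first.
  move=> l hl; rewrite !mxE; case: eqP => [e|]; last by rewrite mul0r.
  by exfalso; move/eqP: hl; apply; apply: val_inj; rewrite /= e.
have hi : (i : nat)%:R = (odd i)%:R + 2 * (i %/ 2)%:R :> R.
  by rewrite {1}(divn_eq i 2) modn2 natrD natrM addrC mulrC.
rewrite /ccoef !natrM !natrD hi.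
have n0R : n0%:R != 0 :> R by rewrite pnatr_eq0 -lt0n.
rewrite [X in X%:R]/= in hi *. set m := (i %/ 2)%N in hi *.
set a := k%:R * pi / (2 * n0%:R).
case: (odd i) => /=.
- set p := 2 * ((1 + 2 * m%:R + 2^-1) * k%:R * pi) / (2 * n0%:R).
  have -> : 2 * ((m%:R + 2^-1) * k%:R * pi) / n0%:R = p - a by rewrite /p /a; field.
  have -> : (n0%:R + k%:R) * pi / (2 * n0%:R) = a + pi/2 by rewrite /a; field.
  have -> : 2 * ((1 + 2 * m%:R + 2^-1) * (n0%:R + k%:R) * pi) / (2 * n0%:R)
      = p + pi + pi/2 + m%:R * (pi *+ 2) by rewrite /p /a mulr2n; field.
  rewrite cosD2pin sinD2pin !cosDpihalf !sinDpihalf cosDpi sinDpi cosB sinB.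
  ring.
- set p := 2 * ((0 + 2 * m%:R + 2^-1) * k%:R * pi) / (2 * n0%:R).
  have -> : 2 * ((m%:R + 2^-1) * k%:R * pi) / n0%:R = p + a by rewrite /p /a; field.
  have -> : (n0%:R + k%:R) * pi / (2 * n0%:R) = a + pi/2 by rewrite /a; field.
  have -> : 2 * ((0 + 2 * m%:R + 2^-1) * (n0%:R + k%:R) * pi) / (2 * n0%:R)
      = p + pi/2 + m%:R * (pi *+ 2) by rewrite /p /a mulr2n; field.
  rewrite cosD2pin sinD2pin !cosDpihalf !sinDpihalf cosD sinD.
  ring.
Qed.
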